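(* Let $I$ be a finite set, $\tau$ a total order of $I$, and $A=(A_1,\dots,A_\ell)$, $B$ set compositions of $I$ with $B$ refining $A$. Then $$\Big(\mathrm{Resf}^{\mathrm{UT}(\tau|_{A_1})}_{\mathrm{UL}(\tau|_{A_1},B|_{A_1})}\otimes\cdots\otimes\mathrm{Resf}^{\mathrm{UT}(\tau|_{A_\ell})}_{\mathrm{UL}(\tau|_{A_\ell},B|_{A_\ell})}\Big)\circ\mathrm{Resf}^{\mathrm{UT}(\tau)}_{\mathrm{UL}(\tau,A)}=\mathrm{Resf}^{\mathrm{UT}(\tau)}_{\mathrm{UL}(\tau,B)}$$ as maps $\mathsf{cf}(\mathrm{UT}(\tau))\to\mathsf{cf}(\mathrm{UL}(\tau,B))$.
   Context: Fix the finite field $\mathbb{F}_q$. For a finite set $I$, $\mathrm{GL}(I)$ is the group of invertible $I\times I$ matrices over $\mathbb{F}_q$ with identity $1_I$. A total order $\tau$ of $I$ is a reflexive, antisymmetric, transitive, total relation $\tau\subseteq I\times I$; $\tau|_J=\tau\cap(J\times J)$. For a relation $\pi$ containing the diagonal, $\mathrm{UT}(\pi)=\{X\in\mathrm{GL}(I):(X-1_I)_{i,j}\ne0\text{ only if }(i,j)\in\pi\}$. A set composition $A=(A_1,\dots,A_\ell)$ of $I$ is a sequence of pairwise disjoint nonempty sets with union $I$; for $J\subseteq I$, $C|_J$ is $(C_1\cap J,\dots)$ with empty sets removed; $B$ refines $A$ if $B=B|_{A_1}\cdots B|_{A_\ell}$ (concatenation). $\mathrm{Asc}(A)=\bigsqcup_{r<s}A_r\times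 A_s$, $\mathrm{Eq}(A)=\bigsqcup_rA_r\times A_r$. $\mathrm{UL}(\tau,A)=\mathrm{UT}(\tau\cap\mathrm{Eq}(A))$, $\mathrm{UR}(\tau,A)=\mathrm{UT}(\{(i,i)\}\cup(\tau\cap\mathrm{Asc}(A)))$, $\mathrm{UP}(\tau,A)=\mathrm{UT}(\tau\cap(\mathrm{Eq}(A)\cup\mathrm{Asc}(A)))=\mathrm{UL}(\tau,A)\ltimes\mathrm{UR}(\tau,A)$. Since $\mathrm{UL}(\tau,A)=\mathrm{UT}(\tau|_{A_1})\oplus\cdots\oplus\mathrm{UT}(\tau|_{A_\ell})$ (block diagonal), $\mathsf{cf}(\mathrm{UL}(\tau,A))$ is identified with $\bigotimes_r\mathsf{cf}(\mathrm{UT}(\tau|_{A_r}))$; similarly $\mathrm{UL}(\tau,B)=\bigoplus_r\mathrm{UL}(\tau|_{A_r},B|_{A_r})$. Here $\mathsf{cf}(G)$ denotes complex class functions on $G$, and $\mathrm{Resf}^{\mathrm{UT}(\tau)}_{\mathrm{UL}(\tau,A)}=\mathrm{Def}^{\mathrm{UP}(\tau,A)}_{\mathrm{UL}(\tau,A)}\circ\mathrm{Res}^{\mathrm{UT}(\tau)}_{\mathrm{UP}(\tau,A)}$, where $\mathrm{Res}$ is restriction and deflation is $\mathrm{Def}^{\mathrm{UP}(\tau,A)}_{\mathrm{UL}(\tau,A)}\psi(g)=\frac{1}{|\mathrm{UR}(\tau,A)|}\sum_{x\in\mathrm{UR}(\tau,A)}\psi(gx)$ for $g\in\mathrm{UL}(\tau,A)$.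 *)

(* Defs.v *)
From HB Require Import structures.
From mathcomp Require Import all_boot all_order all_algebra algC.
Set Implicit Arguments. Unset Strict Implicit. Unset Printing Implicit Defensive.
Import GRing.Theory Num.Theory.
Local Open Scope ring_scope.

Section Defs.
Variable F : finFieldType.

Definition mat (J : finType) := {ffun J * J -> F}.

Definition mmul (J : finType) (X Y : mat J) : mat J :=
  [ffun ij => \sum_(k : J) X (ij.1, k) * Y (k, ij.2)].
Definition mone (J : finType) : mat J := [ffun ij => ((ij.1 == ij.2 :> J)%:R : F)].

Definition invertible (J : finType) (X : mat J) : bool :=
  [exists Y : mat J, (mmul X Y == mone J) && (mmul Y X == mone J)].

Definition UT (J : finType) (pi : rel J) : {set mat J} :=
  [set X : mat J | invertible X &&
     [forall ij : J * J, (X ij - mone J ij != 0) ==> pi ij.1 ij.2]].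

Definition total_order (J : finType) (tau : rel J) : Prop :=
  [/\ reflexive tau, antisymmetric tau, transitive tau & total tau].

Definition set_composition (J : finType) (C : seq {set J}) : Prop :=
  [/\ all (fun S : {set J} => S != set0) C,
      pairwise (fun S T : {set J} => [disjoint S & T]) C &
      \bigcup_(S <- C) S = setT].

Definition restrc (J : finType) (C : seq {set J}) (K : {set J}) : seq {set J} :=
  filter (fun S : {set J} => S != set0) (map (fun S : {set J} => S :&: K) C).

Definition refines (J : finType) (B A : seq {set J}) : Prop :=
  B = flatten (map (restrc B) A).

Definition blk (J : finType) (C : seq {set J}) (r : nat) : {set J} := nth set0 C r.

Definition Asc (J : finType) (C : seq {set J}) : rel J := fun i j =>
  [exists r : 'I_(size C), exists s : 'I_(size C),
     [&& (r < s)%N, i \in blk C r & j \in blk C s]].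
Definition Eqc (J : finType) (C : seq {set J}) : rel J := fun i j =>
  has (fun S : {set J} => (i \in S) && (j \in S)) C.

Definition UL (J : finType) (tau : rel J) (C : seq {set J}) : {set mat J} :=
  UT (fun i j => tau i j && Eqc C i j).
Definition UR (J : finType) (tau : rel J) (C : seq {set J}) : {set mat J} :=
  UT (fun i j => (i == j) || (tau i j && Asc C i j)).
Definition UP (J : finType) (tau : rel J) (C : seq {set J}) : {set mat J} :=
  UT (fun i j => tau i j && (Eqc C i j || Asc C i j)).

(* complex functions on matrices; a class function on G is one constant on
   G-conjugacy classes *)
Definition is_classfun (J : finType) (G : {set mat J}) (psi : mat J -> algC) : Prop :=
  forall g h x, g \in G -> h \in G -> x \in G ->
    mmul g h = mmul h x -> psi x = psi g.

Definition Res (J : finType) (H : {set mat J}) (psi : mat J -> algC) : mat J -> algC :=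
  fun g => if g \in H then psi g else 0.
Definition Def (J : finType) (N : {set mat J}) (psi : mat J -> algC) : mat J -> algC :=
  fun g => (#|N|%:R)^-1 * \sum_(x in N) psi (mmul g x).

Definition Resf (J : finType) (tau : rel J) (C : seq {set J}) (psi : mat J -> algC)
  : mat J -> algC := Def (UR tau C) (Res (UP tau C) psi).

Definition Tsub (J : finType) (A : seq {set J}) (r : nat) : finType :=
  {x : J | x \in blk A r}.
Definition sub_rel (J : finType) (tau : rel J) (A : seq {set J}) (r : nat)
  : rel (Tsub A r) := fun x y => tau (val x) (val y).
Arguments sub_rel [J] tau A r.

Definition sub_comp (J : finType) (B A : seq {set J}) (r : nat) : seq {set Tsub A r} :=
  map (fun S : {set J} => [set x : Tsub A r | val x \in S]) (restrc B (blk A r)).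
Definition blkmx (J : finType) (A : seq {set J}) (r : nat) (X : mat J) : mat (Tsub A r) :=
  [ffun ij => X (val ij.1, val ij.2)].

Definition delta (J : finType) (M : mat J) : mat J -> algC := fun N => (N == M)%:R.

(* The tensor product  Resf_1 (x) ... (x) Resf_l  of linear maps, acting on
   functions on UL(tau,A) = UT(tau|A_1) (+) ... (+) UT(tau|A_l) (identified with
   the tensor product of the function spaces via X |-> (blkmx r X)_r),
   and producing a function on UL(tau,B) = (+)_r UL(tau|A_r, B|A_r)
   (identified likewise via Y |-> (blkmx r Y)_r).  It is defined on the basis
   of delta functions delta_X = (x)_r delta_{X_r} and extended linearly. *)
Definition tensor_Resf (J : finType) (tau : rel J) (A B : seq {set J})
  (phi : mat J -> algC) : mat J -> algC := fun Y =>
  \sum_(X in UL tau A) phi X *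
     \prod_(r < size A) Resf (sub_rel tau A r) (sub_comp B A r)
                            (delta (blkmx A r X)) (blkmx A r Y).

End Defs.

(* Main.v *)
Require Import Defs.
From mathcomp Require Import all_boot all_order all_algebra algC.
From HB Require Import structures.
From mathcomp Require Import all_fingroup.
Set Implicit Arguments. Unset Strict Implicit. Unset Printing Implicit Defensive.
Import GRing.Theory Num.Theory.
Local Open Scope ring_scope.

Section MatBasics.
Variables (F : finFieldType) (J : finType).
Implicit Types X Y Z : mat F J.

Lemma mmulA X Y Z : mmul X (mmul Y Z) = mmul (mmul X Y) Z.
Proof.
apply/ffunP => -[i j]; rewrite !ffunE /=.
under eq_bigr do rewrite ffunE /= big_distrr.
under [RHS]eq_bigr do rewrite ffunE /= big_distrl.
rewrite exchange_big; apply: eq_bigr => k _; apply: eq_bigr => l _ /=.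
by rewrite mulrA.
Qed.

Lemma mmul1l X : mmul (mone F J) X = X.
Proof.
apply/ffunP => -[i j]; rewrite !ffunE /= (bigD1 i) //= ffunE /= eqxx mul1r.
rewrite big1 ?addr0 // => k /negbTE ki; rewrite ffunE /= eq_sym ki mul0r //.
Qed.

Lemma mmul1r X : mmul X (mone F J) = X.
Proof.
apply/ffunP => -[i j]; rewrite !ffunE /= (bigD1 j) //= ffunE /= eqxx mulr1.
rewrite big1 ?addr0 // => k /negbTE kj; rewrite ffunE /= kj mulr0 //.
Qed.

Definition minv X : mat F J :=
  odflt X [pick Y | (mmul X Y == mone F J) && (mmul Y X == mone F J)].

Lemma minvP X : invertible X ->
  mmul X (minv X) = mone F J /\ mmul (minv X) X = mone F J.
Proof.
rewrite /invertible /minv => /existsP[Y HY].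
case: pickP => [Z /andP[/eqP -> /eqP ->] //|/(_ Y)]; by rewrite HY.
Qed.

Lemma invertible_one : invertible (mone F J).
Proof. by apply/existsP; exists (mone F J); rewrite mmul1l eqxx. Qed.

Lemma invertible_mul X Y : invertible X -> invertible Y -> invertible (mmul X Y).
Proof.
move=> /minvP[X1 X2] /minvP[Y1 Y2]; apply/existsP; exists (mmul (minv Y) (minv X)).
rewrite -mmulA (mmulA Y) Y1 mmul1l X1 eqxx /=.
by rewrite -mmulA (mmulA (minv X)) X2 mmul1l Y2.
Qed.

Lemma invertible_minv X : invertible X -> invertible (minv X).
Proof. by move=> /minvP[X1 X2]; apply/existsP; exists X; rewrite X1 X2 !eqxx. Qed.

End MatBasics.

Definition GLt (F : finFieldType) (J : finType) := {X : mat F J | invertible X}.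
HB.instance Definition _ (F : finFieldType) (J : finType) :=
  Finite.on (GLt F J).
HB.instance Definition _ (F : finFieldType) (J : finType) :=
  SubType.on (GLt F J).

Section GLgroup.
Variables (F : finFieldType) (J : finType).
Local Notation G := (GLt F J).

Definition gmul (g h : G) : G :=
  exist _ (mmul (val g) (val h)) (invertible_mul (valP g) (valP h)).
Definition gone : G := exist _ (mone F J) (invertible_one F J).
Definition ginv (g : G) : G := exist _ (minv (val g)) (invertible_minv (valP g)).

Lemma gmulA : associative gmul.
Proof. by move=> x y z; apply: val_inj; rewrite /= mmulA. Qed.
Lemma gmul1 : left_id gone gmul.
Proof. by move=> x; apply: val_inj; rewrite /= mmul1l. Qed.
Lemma gmulV : left_inverse gone ginv gmul.
Proof. by move=> x; apply: val_inj; rewrite /= (proj2 (minvP (valP x))). Qed.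

End GLgroup.

HB.instance Definition _ (F : finFieldType) (J : finType) :=
  Finite_isGroup.Build (GLt F J) (@gmulA F J) (@gmul1 F J) (@gmulV F J).

Section GLgroup2.
Variables (F : finFieldType) (J : finType).
Local Notation G := (GLt F J).
Lemma valM (g h : G) : val (g * h)%g = mmul (val g) (val h).
Proof. by []. Qed.
Lemma val1 : val (1%g : G) = mone F J.
Proof. by []. Qed.
End GLgroup2.
Section GroupSum.
Variables (gT : finGroupType) (D R : {group gT}).

Lemma card_fiber w : w \in (D * R)%g ->
  #|[set x in D | w \in (x *: R)%g]| = #|D :&: R|.
Proof.
case/mulsgP=> d r Dd Rr ->.
have -> : [set x in D | (d * r)%g \in (x *: R)%g] = (mulg d) @: (D :&: R).
  apply/setP => x; rewrite !inE; apply/andP/imsetP => [[Dx]|[y]].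
    rewrite mem_lcoset => H; exists (d^-1 * x)%g; last by rewrite mulKVg.
    rewrite !inE groupM ?groupV //=.
    have H1 : (x^-1 * d)%g \in R by rewrite -(groupMr _ Rr) -mulgA.
    by rewrite -[(d^-1 * x)%g]invgK invMg invgK groupV.
  rewrite !inE => /andP[Dy Ry] ->; split; first by rewrite groupM.
  by rewrite mem_lcoset invMg -!mulgA mulKg groupM ?groupV.
by rewrite card_imset //; apply: mulgI.
Qed.

Lemma sum_mul_groups (f : gT -> algC) :
  \sum_(x in D) \sum_(z in R) f (x * z)%g = #|D :&: R|%:R * \sum_(w in (D * R)%g) f w.
Proof.
have E x : \sum_(z in R) f (x * z)%g = \sum_(w | w \in (x *: R)%g) f w.
  rewrite [RHS](reindex_inj (mulgI x)) /=; apply: eq_bigl => z.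
  by rewrite mem_lcoset mulKg.
under eq_bigr do rewrite E.
rewrite (exchange_big_dep (fun w => w \in (D * R)%g)) /=; last first.
  by move=> x w Dx; rewrite mem_lcoset => Rw; rewrite -(mulKVg x w) mem_mulg.
rewrite big_distrr /=; apply: eq_bigr => w DRw.
rewrite -(card_fiber DRw) sumr_const mulr_natl; congr (_ *+ _).
by apply: eq_card => x; rewrite inE.
Qed.

End GroupSum.

Section UTlemmas.
Variables (F : finFieldType) (J : finType).
Implicit Types X Y Z : mat F J.
Implicit Types pi : rel J.

Definition supp pi X := forall i j, ~~ pi i j -> X (i, j) = mone F J (i, j).

Lemma UTP pi X : reflect (invertible X /\ supp pi X) (X \in UT F pi).
Proof.
rewrite inE; apply: (iffP andP) => -[iX H]; split => //.
  move=> i j pij; apply/eqP; rewrite -subr_eq0; apply: contraNT pij => nz.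
  by have /forallP/(_ (i, j)) := H; rewrite nz.
apply/forallP => -[i j] /=; apply/implyP; apply: contraR => pij.
by rewrite H // subrr.
Qed.

Lemma mone_ij i j : mone F J (i, j) = (i == j)%:R.
Proof. by rewrite ffunE. Qed.

Lemma mmulE X Y i j : mmul X Y (i, j) = \sum_k X (i, k) * Y (k, j).
Proof. by rewrite ffunE. Qed.

Lemma supp_mul pi X Y : (forall i k j, pi i k -> pi k j -> pi i j) ->
  supp pi X -> supp pi Y -> supp pi (mmul X Y).
Proof.
move=> tr sX sY i j pij; rewrite mmulE mone_ij.
transitivity (\sum_k ((i == k)%:R * (k == j)%:R : F)); last first.
  rewrite (bigD1 i) //= eqxx mul1r big1 ?addr0 // => k /negbTE.
  by rewrite eq_sym => ->; rewrite mul0r.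
apply: eq_bigr => k _.
case: (boolP (pi i k)) => pik.
  have pkj : ~~ pi k j by apply: contra pij; apply: tr.
  rewrite (sY _ _ pkj) mone_ij; case: (eqVneq k j) => [->|_]; last by rewrite !mulr0.
  by rewrite (sX _ _ pij) mone_ij.
rewrite (sX _ _ pik) mone_ij; case: (eqVneq i k) => [<-|_]; last by rewrite !mul0r.
by rewrite (sY _ _ pij) mone_ij.
Qed.

Lemma UT_mul pi X Y : (forall i k j, pi i k -> pi k j -> pi i j) ->
  X \in UT F pi -> Y \in UT F pi -> mmul X Y \in UT F pi.
Proof.
move=> tr /UTP[iX sX] /UTP[iY sY]; apply/UTP; split.
  exact: invertible_mul.
exact: supp_mul.
Qed.

Lemma UT1 pi : mone F J \in UT F pi.
Proof. apply/UTP; split; [exact: invertible_one| by []]. Qed.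

Lemma UT_sub pi pi' X : (forall i j, pi i j -> pi' i j) -> X \in UT F pi -> X \in UT F pi'.
Proof.
move=> H /UTP[iX sX]; apply/UTP; split => // i j p'; apply: sX.
by apply: contra p'; apply: H.
Qed.

Definition UTg pi : {set GLt F J} := [set g | val g \in UT F pi].

Lemma UTgE pi g : (g \in UTg pi) = (val g \in UT F pi).
Proof. by rewrite /UTg in_set. Qed.

Lemma UTg_group pi : (forall i k j, pi i k -> pi k j -> pi i j) -> group_set (UTg pi).
Proof.
move=> tr; apply/group_setP; split; first by rewrite UTgE val1 UT1.
move=> x y; rewrite !UTgE => Hx Hy; rewrite valM; exact: UT_mul tr Hx Hy.
Qed.

Lemma UT_inv X : X \in UT F (fun _ _ => true) = invertible X.
Proof. by apply/UTP/idP => [[]//|iX]; split. Qed.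

Lemma UTg_imset pi : val @: UTg pi = UT F pi.
Proof.
apply/setP => X; apply/imsetP/idP => [[g]|UX]; first by rewrite UTgE => ? ->.
have iX : invertible X by case/UTP: UX.
by exists (exist _ X iX); rewrite ?UTgE.
Qed.

Lemma card_UTg pi : #|UTg pi| = #|UT F pi|.
Proof. by rewrite -UTg_imset card_imset //; apply: val_inj. Qed.

Lemma sum_UTg pi (f : mat F J -> algC) :
  \sum_(X in UT F pi) f X = \sum_(g in UTg pi) f (val g).
Proof. by rewrite -UTg_imset big_imset //= => x y _ _; apply: val_inj. Qed.

End UTlemmas.
Section Comp.
Variable J : finType.
Implicit Types C : seq {set J}.

Definition hasin C (i : J) := has (fun S : {set J} => i \in S) C.

Lemma AscP C i j : reflect (exists r s, [/\ (r < s)%N, (s < size C)%N,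
   i \in blk C r & j \in blk C s]) (Asc C i j).
Proof.
rewrite /Asc; apply: (iffP existsP) => [[r /existsP[s /and3P[rs hi hj]]]|[r [s [rs ss hi hj]]]].
  by exists r, s; split.
exists (Ordinal (ltn_trans rs ss)); apply/existsP; exists (Ordinal ss).
by rewrite /= rs hi hj.
Qed.

Lemma Asc_nil (i j : J) : Asc [::] i j = false.
Proof. by apply/AscP => -[r [s [_ ]]]. Qed.

Lemma Asc_cons S C i j : Asc (S :: C) i j = ((i \in S) && hasin C j) || Asc C i j.
Proof.
apply/AscP/orP => [[r [s [rs ss hi hj]]]|].
  case: s rs ss hj => [//|s] rs ss hj.
  case: r rs hi => [|r] rs hi.
    by left; rewrite hi /=; apply/(has_nthP set0); exists s.
  by right; apply/AscP; exists r, s.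
case=> [/andP[hi /(has_nthP set0)[s ss hj]]|/AscP[r [s [rs ss hi hj]]]].
  by exists 0%N, s.+1.
by exists r.+1, s.+1.
Qed.

Lemma hasin_cons S C i : hasin (S :: C) i = (i \in S) || hasin C i.
Proof. by []. Qed.

Lemma hasin_cat C1 C2 i : hasin (C1 ++ C2) i = hasin C1 i || hasin C2 i.
Proof. by rewrite /hasin has_cat. Qed.

Lemma Asc_cat C1 C2 i j :
  Asc (C1 ++ C2) i j = [|| Asc C1 i j, hasin C1 i && hasin C2 j | Asc C2 i j].
Proof.
elim: C1 => [|S C1 IH] /=; first by rewrite Asc_nil.
rewrite !Asc_cons IH hasin_cat.
by case: (i \in S); case: (hasin C1 j); case: (hasin C2 j); case: (hasin C1 i);
  case: (Asc C1 i j); case: (Asc C2 i j).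
Qed.

Lemma hasin_filter0 C (i : J) : hasin (filter (fun S => S != set0) C) i = hasin C i.
Proof.
elim: C => [|S C IH] //=; case: (eqVneq S set0) => [->|_] /=; last by rewrite IH.
by rewrite /hasin /= inE.
Qed.

Lemma Asc_filter0 C (i j : J) : Asc (filter (fun S => S != set0) C) i j = Asc C i j.
Proof.
elim: C => [|S C IH] //=; case: (eqVneq S set0) => [->|_] /=; last first.
  by rewrite !Asc_cons IH hasin_filter0.
by rewrite Asc_cons inE IH.
Qed.

Lemma Eqc_filter0 C (i j : J) : Eqc (filter (fun S => S != set0) C) i j = Eqc C i j.
Proof.
rewrite /Eqc; elim: C => [|S C IH] //=; case: (eqVneq S set0) => [->|_] /=; rewrite IH //. by rewrite inE.
Qed.

Lemma Asc_mapI K C (i j : J) :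
  Asc (map (fun S : {set J} => S :&: K) C) i j = [&& i \in K, j \in K & Asc C i j].
Proof.
elim: C => [|S C IH] /=; first by rewrite Asc_nil !andbF.
rewrite !Asc_cons IH /hasin has_map inE.
have -> : has (preim (fun S0 : {set J} => S0 :&: K) (fun T : {set J} => j \in T)) C
   = (j \in K) && has (fun T : {set J} => j \in T) C.
  elim: C {IH} => [|T C' IHC] /=; first by rewrite andbF.
  by rewrite IHC inE; case: (j \in T); case: (j \in K).
by case: (boolP (i \in K)) => iK; case: (boolP (j \in K)) => jK; rewrite /= ?andbF ?andbT ?orbF.
Qed.

Lemma Eqc_mapI K C (i j : J) :
  Eqc (map (fun S : {set J} => S :&: K) C) i j = [&& i \in K, j \in K & Eqc C i j].
Proof.
rewrite /Eqc; elim: C => [|S C IH] /=; first by rewrite !andbF.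
rewrite IH !inE.
by case: (boolP (i \in K)) => iK; case: (boolP (j \in K)) => jK;
  rewrite /= ?andbF ?andbT ?orbF.
Qed.

Lemma hasin_restrc B K (i : J) : hasin (restrc B K) i = (i \in K) && hasin B i.
Proof.
rewrite /restrc hasin_filter0 /hasin has_map.
elim: B => [|T C' IHC] /=; first by rewrite andbF.
by rewrite IHC inE; case: (i \in T); case: (i \in K).
Qed.

Lemma Asc_restrc B K (i j : J) : Asc (restrc B K) i j = [&& i \in K, j \in K & Asc B i j].
Proof. by rewrite /restrc Asc_filter0 Asc_mapI. Qed.

Lemma Eqc_restrc B K (i j : J) : Eqc (restrc B K) i j = [&& i \in K, j \in K & Eqc B i j].
Proof. by rewrite /restrc Eqc_filter0 Eqc_mapI. Qed.

Lemma refine_Asc B A (i j : J) : (forall k, hasin B k) ->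
  Asc (flatten (map (restrc B) A)) i j = (Eqc A i j && Asc B i j) || Asc A i j.
Proof.
move=> hB.
have hf k A' : hasin (flatten (map (restrc B) A')) k = hasin A' k.
  elim: A' => [|a A' IH] //=; rewrite hasin_cat IH hasin_restrc hB andbT //.
elim: A => [|a A IH] /=; first by rewrite Asc_nil.
rewrite Asc_cat IH Asc_restrc hasin_restrc hB hf Asc_cons /Eqc /=.
by case: (i \in a); case: (j \in a); case: (Asc B i j); case: (Asc A i j);
  case: (hasin A j); case: (has _ A).
Qed.

End Comp.

Section Comp2.
Variable J : finType.
Implicit Types C : seq {set J}.
Lemma Asc_map (T : finType) (h : T -> J) C (x y : T) :
  Asc (map (fun S : {set J} => [set z | h z \in S]) C) x y = Asc C (h x) (h y).
Proof.
elim: C => [|S C IH] /=; first by rewrite !Asc_nil.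
by rewrite !Asc_cons IH inE /hasin has_map; congr (_ && _ || _); apply: eq_has => T'; rewrite /= inE.
Qed.

Lemma Eqc_map (T : finType) (h : T -> J) C (x y : T) :
  Eqc (map (fun S : {set J} => [set z | h z \in S]) C) x y = Eqc C (h x) (h y).
Proof. by rewrite /Eqc has_map; apply: eq_has => S; rewrite /= !inE. Qed.

End Comp2.

Section SetComp.
Variable J : finType.
Variable C : seq {set J}.
Hypothesis hC : set_composition C.

Definition bidx (i : J) : nat := find (fun S : {set J} => i \in S) C.

Lemma hasin_bigcup (D : seq {set J}) i : (i \in \bigcup_(S <- D) S) = hasin D i.
Proof. by elim: D => [|S D IH]; rewrite ?big_nil ?in_set0 // big_cons in_setU IH. Qed.

Lemma comp_cover i : hasin C i.
Proof. by case: hC => _ _ hU; rewrite -hasin_bigcup hU inE. Qed.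

Lemma bidx_lt i : (bidx i < size C)%N.
Proof. by rewrite /bidx -has_find; apply: comp_cover. Qed.

Lemma mem_bidx i : i \in blk C (bidx i).
Proof. exact: (nth_find set0 (comp_cover i)). Qed.

Lemma bidx_uniq i r : i \in blk C r -> bidx i = r.
Proof.
move=> hi; have rs : (r < size C)%N.
  by rewrite ltnNge; apply: contraL hi => /(nth_default set0); rewrite /blk => ->; rewrite inE.
case: hC => _ /(pairwiseP set0) hP _.
have hi' := mem_bidx i; have bs := bidx_lt i.
case: (ltngtP (bidx i) r) => // h.
  by have := hP _ _ bs rs h => /disjointFr/(_ hi')/negbT; rewrite hi.
by have := hP _ _ rs bs h => /disjointFr/(_ hi)/negbT; rewrite hi'.
Qed.

Lemma Eqc_bidx i j : Eqc C i j = (bidx i == bidx j).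
Proof.
apply/idP/eqP => [/(has_nthP set0)[r _ /andP[hi hj]]|e].
  by rewrite (bidx_uniq hi) (bidx_uniq hj).
apply/(has_nthP set0); exists (bidx i); first exact: bidx_lt.
by rewrite mem_bidx e mem_bidx.
Qed.

Lemma Asc_bidx i j : Asc C i j = (bidx i < bidx j)%N.
Proof.
apply/AscP/idP => [[r [s [rs _ hi hj]]]|h].
  by rewrite (bidx_uniq hi) (bidx_uniq hj).
by exists (bidx i), (bidx j); split => //; rewrite ?bidx_lt ?mem_bidx.
Qed.

End SetComp.
Section Blocks.
Variables (F : finFieldType) (I : finType) (A : seq {set I}).
Hypothesis hA : set_composition A.
Local Notation a := (bidx A).
Local Notation n := (size A).
Implicit Types X Y Z : mat F I.

Definition bdiag X := forall i j, a i != a j -> X (i, j) = 0.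
Definition bdpart X : mat F I := [ffun ij => if a ij.1 == a ij.2 then X ij else 0].

Lemma bdpartE X i j : bdpart X (i, j) = if a i == a j then X (i, j) else 0.
Proof. by rewrite ffunE. Qed.

Lemma bdpart_bdiag X : bdiag (bdpart X).
Proof. by move=> i j /negbTE h; rewrite bdpartE h. Qed.

Lemma bdiag_bdpart X : bdiag X -> bdpart X = X.
Proof.
move=> h; apply/ffunP => -[i j]; rewrite bdpartE.
by case: eqP => // /eqP e; rewrite h.
Qed.

Lemma mem_blk_bidx i r : i \in blk A r -> a i = r.
Proof. exact: bidx_uniq. Qed.

Lemma mul_bdpart X Z : bdiag X -> mmul X (bdpart Z) = bdpart (mmul X Z).
Proof.
move=> hX; apply/ffunP => -[i j]; rewrite bdpartE !mmulE.
case: eqP => e.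
  apply: eq_bigr => k _; rewrite bdpartE; case: eqP => // /eqP e'.
  by rewrite hX ?mul0r // e eq_sym.
rewrite big1 // => k _; rewrite bdpartE; case: eqP => [e'|]; last by rewrite mulr0.
by rewrite hX ?mul0r //; apply/eqP => e''; apply: e; rewrite e'' e'.
Qed.

Lemma bdpart_mul X Z : bdiag X -> mmul (bdpart Z) X = bdpart (mmul Z X).
Proof.
move=> hX; apply/ffunP => -[i j]; rewrite bdpartE !mmulE.
case: eqP => e.
  apply: eq_bigr => k _; rewrite bdpartE; case: eqP => // /eqP e'.
  by rewrite hX ?mulr0 // -e eq_sym.
rewrite big1 // => k _; rewrite bdpartE; case: eqP => [e'|]; last by rewrite mul0r.
by rewrite hX ?mulr0 //; apply/eqP => e''; apply: e; rewrite e' e''.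
Qed.

Lemma mone_bdiag : bdiag (mone F I).
Proof. move=> i j; rewrite mone_ij; case: (eqVneq i j) => [->|_]; by rewrite ?eqxx. Qed.

Lemma bdiag_mul X Y : bdiag X -> bdiag Y -> bdiag (mmul X Y).
Proof.
by move=> hX hY; rewrite -(bdiag_bdpart hY) mul_bdpart //; apply: bdpart_bdiag.
Qed.

Lemma bdiag_inv X Z : bdiag X -> mmul X Z = mone F I -> mmul Z X = mone F I -> bdiag Z.
Proof.
move=> hX h1 h2.
have e : mmul X (bdpart Z) = mone F I by rewrite mul_bdpart // h1 bdiag_bdpart //; apply: mone_bdiag.
have -> : Z = bdpart Z by rewrite -{1}[Z]mmul1r -e mmulA h2 mmul1l.
exact: bdpart_bdiag.
Qed.

Lemma sum_blk (r : nat) (g : I -> F) : (forall k, k \notin blk A r -> g k = 0) ->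
  \sum_k g k = \sum_(y : Tsub A r) g (val y).
Proof.
move=> h; rewrite (bigID (fun k => k \in blk A r)) /= [X in _ + X]big1 ?addr0 //.
exact: (big_sub (blk A r) g).
Qed.

Lemma blkmxE r X (x y : Tsub A r) : blkmx A r X (x, y) = X (val x, val y).
Proof. by rewrite ffunE. Qed.

Lemma blk_mul r X Y : bdiag X -> blkmx A r (mmul X Y) = mmul (blkmx A r X) (blkmx A r Y).
Proof.
move=> hX; apply/ffunP => -[x y]; rewrite blkmxE !mmulE.
rewrite (@sum_blk r) => [|k hk]; first by apply: eq_bigr => z _; rewrite !blkmxE.
rewrite hX ?mul0r //; rewrite (mem_blk_bidx (valP x)).
by apply: contra hk => /eqP ->; apply: mem_bidx.
Qed.

Lemma blk_one r : blkmx A r (mone F I) = mone F (Tsub A r).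
Proof. by apply/ffunP => -[x y]; rewrite blkmxE !mone_ij. Qed.

Lemma blk_invertible r X : bdiag X -> invertible X ->
  mmul (blkmx A r X) (blkmx A r (minv X)) = mone F (Tsub A r) /\
  mmul (blkmx A r (minv X)) (blkmx A r X) = mone F (Tsub A r).
Proof.
move=> hX /minvP[h1 h2]; have hZ := bdiag_inv hX h1 h2.
by rewrite -!blk_mul // h1 h2 blk_one.
Qed.

Lemma blk_invertible' r X : bdiag X -> invertible X -> invertible (blkmx A r X).
Proof.
move=> hX iX; have [h1 h2] := blk_invertible r hX iX.
by apply/existsP; exists (blkmx A r (minv X)); rewrite h1 h2 eqxx.
Qed.

Definition ordb (i : I) : 'I_n := Ordinal (bidx_lt hA i).

Lemma bdiag_ext X Y : bdiag X -> bdiag Y ->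
  (forall r : 'I_n, blkmx A r X = blkmx A r Y) -> X = Y.
Proof.
move=> hX hY h; apply/ffunP => -[i j].
case: (eqVneq (a i) (a j)) => e; last by rewrite hX ?hY.
have hi : i \in blk A (ordb i) by apply: mem_bidx.
have hj : j \in blk A (ordb i) by rewrite /= e; apply: mem_bidx.
pose x : Tsub A (ordb i) := exist _ i hi.
pose y : Tsub A (ordb i) := exist _ j hj.
have := congr1 (fun M : mat F (Tsub A (ordb i)) => M (x, y)) (h (ordb i)).
by rewrite !blkmxE.
Qed.

Definition asm (f : forall r : 'I_n, mat F (Tsub A r)) : mat F I :=
  [ffun ij => \sum_(r : 'I_n)
     match insub ij.1 : option (Tsub A r), insub ij.2 : option (Tsub A r) with
     | Some x, Some y => f r (x, y) | _, _ => 0 end].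

Lemma eq_asm f g : (forall r, f r = g r) -> asm f = asm g.
Proof.
move=> h; apply/ffunP => ij; rewrite !ffunE; apply: eq_bigr => r _; by rewrite h.
Qed.

Lemma asm_bdiag f : bdiag (asm f).
Proof.
move=> i j e; rewrite ffunE big1 // => r _ /=.
case: (@insubP _ _ (Tsub A r) i) => [x hi _|_]; case: (@insubP _ _ (Tsub A r) j) => [y hj _|_] //.
by case/eqP: e; rewrite (mem_blk_bidx hi) (mem_blk_bidx hj).
Qed.

Lemma blk_asm f (r : 'I_n) : blkmx A r (asm f) = f r.
Proof.
apply/ffunP => -[x y]; rewrite blkmxE ffunE /= (bigD1 r) //= !valK big1 ?addr0 //.
move=> s sr; case: (@insubP _ _ (Tsub A s) (val x)) => [x2 hx _|_] //; case: (@insubP _ _ (Tsub A s) (val y)) => [y2 hy _|_] //.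
case/eqP: sr; apply: val_inj => /=.
by rewrite -(mem_blk_bidx hx) (mem_blk_bidx (valP x)).
Qed.

Lemma asm_mul f g :
  mmul (asm f) (asm g) = asm (fun r => mmul (f r) (g r)).
Proof.
apply: bdiag_ext; [apply: bdiag_mul; apply: asm_bdiag|apply: asm_bdiag|] => r.
rewrite blk_mul; last by apply: asm_bdiag. by rewrite (blk_asm f r) (blk_asm g r) (blk_asm _ r).
Qed.

Lemma asm_one : asm (fun r => mone F (Tsub A r)) = mone F I.
Proof.
apply: bdiag_ext; [apply: asm_bdiag|apply: mone_bdiag|] => r.
by rewrite blk_asm blk_one.
Qed.

Lemma asm_invertible f : (forall r, invertible (f r)) -> invertible (asm f).
Proof.
move=> h; apply/existsP; exists (asm (fun r => minv (f r))).
rewrite !asm_mul.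
rewrite (@eq_asm (fun r => mmul (f r) (minv (f r))) (fun r => mone F (Tsub A r))); last first.
  by move=> r; case: (minvP (h r)).
rewrite (@eq_asm (fun r => mmul (minv (f r)) (f r)) (fun r => mone F (Tsub A r))); last first.
  by move=> r; case: (minvP (h r)).
by rewrite asm_one eqxx.
Qed.

End Blocks.
Section Main.
Variables (F : finFieldType) (I : finType) (tau : rel I) (A B : seq {set I}).
Hypotheses (htau : total_order tau) (hA : set_composition A) (hB : set_composition B)
  (hR : refines B A).
Local Notation a := (bidx A).
Local Notation b := (bidx B).
Local Notation n := (size A).

Lemma tau_refl i : tau i i. Proof. by case: htau. Qed.
Lemma tau_trans i k j : tau i k -> tau k j -> tau i j.
Proof. by case: htau => _ _ t _ h1 h2; apply: t h2. Qed.

Lemma kAB i j : (b i < b j)%N = ((a i == a j) && (b i < b j)%N) || (a i < a j)%N.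
Proof.
have := refine_Asc A i j (comp_cover hB); rewrite -hR.
by rewrite !(Asc_bidx hA) !(Asc_bidx hB) (Eqc_bidx hA).
Qed.

Lemma ab_lt i j : (a i < a j)%N -> (b i < b j)%N.
Proof. by move=> h; rewrite kAB h orbT. Qed.

Lemma ba_le i j : (b i < b j)%N -> (a i <= a j)%N.
Proof.
move=> h; rewrite leqNgt; apply/negP => /ab_lt h'.
by have := ltn_trans h h'; rewrite ltnn.
Qed.

Lemma ba_eq i j : b i = b j -> a i = a j.
Proof.
move=> e; apply/eqP; rewrite eqn_leq; apply/andP; split; rewrite leqNgt;
  apply/negP => /ab_lt; by rewrite e ltnn.
Qed.

Definition pUL C := fun i j : I => tau i j && Eqc C i j.
Definition pUR C := fun i j : I => (i == j) || (tau i j && Asc C i j).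
Definition pUP C := fun i j : I => tau i j && (Eqc C i j || Asc C i j).
Definition pD := fun i j : I => (i == j) || [&& tau i j, Asc B i j & Eqc A i j].

Definition trans_rel (J : finType) (p : rel J) := forall i k j, p i k -> p k j -> p i j.

Lemma pUP_le C : set_composition C -> forall i j,
  pUP C i j = tau i j && (bidx C i <= bidx C j)%N.
Proof. by move=> hC i j; rewrite /pUP (Eqc_bidx hC) (Asc_bidx hC) -leq_eqVlt. Qed.

Lemma trans_pUP C : set_composition C -> trans_rel (pUP C).
Proof.
move=> hC i k j; rewrite !(pUP_le hC) => /andP[t1 l1] /andP[t2 l2].
by rewrite (tau_trans t1 t2) (leq_trans l1 l2).
Qed.

Lemma trans_pUL C : set_composition C -> trans_rel (pUL C).
Proof.
move=> hC i k j; rewrite /pUL !(Eqc_bidx hC) => /andP[t1 /eqP l1] /andP[t2 /eqP l2].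
by rewrite (tau_trans t1 t2) l1 l2 eqxx.
Qed.

Lemma trans_pUR C : set_composition C -> trans_rel (pUR C).
Proof.
move=> hC i k j; rewrite /pUR !(Asc_bidx hC).
case: (eqVneq i k) => [->//|_] /= /andP[t1 l1].
case: (eqVneq k j) => [<-|_] /=; first by rewrite t1 l1 orbT.
by case/andP=> t2 l2; rewrite (tau_trans t1 t2) (ltn_trans l1 l2) orbT.
Qed.

Lemma trans_pD : trans_rel pD.
Proof.
move=> i k j; rewrite /pD !(Asc_bidx hB) !(Eqc_bidx hA).
case: (eqVneq i k) => [->//|_] /= /and3P[t1 l1 /eqP e1].
case: (eqVneq k j) => [<-|_] /=; first by rewrite t1 l1 e1 eqxx orbT.
by case/and3P=> t2 l2 /eqP e2; rewrite (tau_trans t1 t2) (ltn_trans l1 l2) e1 e2 eqxx orbT.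
Qed.

Lemma UL_E C : UL F tau C = UT F (pUL C). Proof. by []. Qed.
Lemma UR_E C : UR F tau C = UT F (pUR C). Proof. by []. Qed.
Lemma UP_E C : UP F tau C = UT F (pUP C). Proof. by []. Qed.

Lemma Asc_sub r (x y : Tsub A r) :
  Asc (sub_comp B A r) x y = Asc B (val x) (val y).
Proof. by rewrite /sub_comp Asc_map Asc_restrc (valP x) (valP y). Qed.

Lemma Eqc_sub r (x y : Tsub A r) :
  Eqc (sub_comp B A r) x y = Eqc B (val x) (val y).
Proof. by rewrite /sub_comp Eqc_map Eqc_restrc (valP x) (valP y). Qed.


Lemma UT_ext (J : finType) (p p' : rel J) : (forall i j, p i j = p' i j) -> UT F p = UT F p'.
Proof.
move=> h; apply/setP => X; rewrite !inE; congr (_ && _).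
by apply: eq_forallb => ij; rewrite h.
Qed.

Local Notation URr r := (UR F (@sub_rel I tau A r) (sub_comp B A r)).
Local Notation UPr r := (UP F (@sub_rel I tau A r) (sub_comp B A r)).

Lemma URr_E r : URr r = UT F (fun x y : Tsub A r => pUR B (val x) (val y)).
Proof. by rewrite /UR; apply: UT_ext => x y; rewrite /pUR Asc_sub. Qed.

Lemma UPr_E r : UPr r = UT F (fun x y : Tsub A r => pUP B (val x) (val y)).
Proof. by rewrite /UP; apply: UT_ext => x y; rewrite /pUP Asc_sub Eqc_sub. Qed.

Lemma mone_sub r (x y : Tsub A r) : mone F (Tsub A r) (x, y) = mone F I (val x, val y).
Proof. by rewrite !mone_ij. Qed.

Lemma pD_bdiag X : X \in UT F pD -> bdiag A X.
Proof.
case/UTP => _ sX i j e; rewrite sX ?mone_ij.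
  by case: (eqVneq i j) e => [->|]; rewrite ?eqxx.
rewrite /pD (Eqc_bidx hA) (negbTE e) !andbF orbF.
by apply: contra e => /eqP ->.
Qed.

Lemma D_blocks X : bdiag A X -> invertible X ->
  (X \in UT F pD) = [forall r : 'I_n, blkmx A r X \in URr r].
Proof.
move=> hX iX; apply/idP/forallP => [/UTP[_ sX] r|h].
  rewrite URr_E; apply/UTP; split; first exact: blk_invertible'.
  move=> x y hxy; rewrite blkmxE mone_sub sX //.
  apply: contra hxy; rewrite /pD /pUR => /orP[->//|/and3P[-> -> _]].
  by rewrite orbT.
apply/UTP; split => // i j pij.
case: (eqVneq (a i) (a j)) => e; last first.
  by rewrite hX // mone_ij; case: (eqVneq i j) e => [->|]; rewrite ?eqxx.
have hi : i \in blk A (ordb hA i) by apply: mem_bidx.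
have hj : j \in blk A (ordb hA i) by rewrite /= e; apply: mem_bidx.
pose x : Tsub A (ordb hA i) := exist _ i hi.
pose y : Tsub A (ordb hA i) := exist _ j hj.
have := h (ordb hA i); rewrite URr_E => /UTP[_ sB].
have := sB x y; rewrite blkmxE mone_sub /=; apply.
apply: contra pij; rewrite /pUR /pD (Eqc_bidx hA) e eqxx andbT.
by case/orP=> [->//|/andP[-> ->]]; rewrite orbT.
Qed.

Definition phi (X : mat F I) : {dffun forall r : 'I_n, mat F (Tsub A r)} :=
  [ffun r : 'I_n => blkmx A r X].

Lemma card_D : #|UT F pD| = (\prod_(r < n) #|URr r|)%N.
Proof.
rewrite -(@card_in_imset _ _ phi); last first.
  move=> X1 X2 h1 h2 e; apply: (bdiag_ext hA); try exact: pD_bdiag.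
  move=> r; have := congr1 (fun f : {dffun forall r : 'I_n, mat F (Tsub A r)} => f r) e.
  by rewrite /phi !ffunE.
pose Fm := fun r : 'I_n => [pred M | M \in URr r].
transitivity #|(family Fm : simpl_pred {dffun forall r : 'I_n, mat F (Tsub A r)})|.
  apply: eq_card => f; apply/imsetP/familyP => [[X hXD ->] r|hf].
    rewrite /Fm /phi ffunE /=.
    have iX : invertible X by case/UTP: hXD.
    have bX := pD_bdiag hXD.
    by move: hXD; rewrite (D_blocks bX iX) => /forallP; apply.
  have iF r : invertible (f r) by have := hf r; rewrite /Fm /= => /UTP[].
  exists (asm f).
    rewrite D_blocks; [|exact: asm_bdiag|exact: asm_invertible].
    by apply/forallP => r; rewrite (blk_asm hA f r); have := hf r; rewrite /Fm /=.
  by apply/ffunP => r; rewrite /phi ffunE (blk_asm hA f r).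
rewrite card_family foldrE big_map big_enum /=.
by apply: eq_bigr => r _; apply: eq_card => M; rewrite /Fm inE.
Qed.


Lemma sum_eq_ind (J : finType) (S : {set mat F J}) (v : mat F J) :
  \sum_(u in S) ((u == v)%:R : algC) = (v \in S)%:R.
Proof.
case: (boolP (v \in S)) => hv.
  rewrite (bigD1 v) //= eqxx big1 ?addr0 // => u /andP[_ /negbTE ->] //.
by rewrite big1 // => u hu; case: eqP => // e; rewrite -e hu in hv.
Qed.

Lemma Resf_delta (J : finType) (t : rel J) (C : seq {set J}) (M Y0 Z0 : mat F J) :
  (forall u, u \in UR F t C -> mmul Y0 u \in UP F t C) ->
  mmul Y0 Z0 = mone F J -> mmul Z0 Y0 = mone F J ->
  Resf t C (delta M) Y0 = (#|UR F t C|%:R)^-1 * ((mmul Z0 M) \in UR F t C)%:R.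
Proof.
move=> h e1 e2; rewrite /Resf /Def; congr (_ * _); rewrite -sum_eq_ind.
apply: eq_bigr => u hu; rewrite /Res (h u hu) /delta.
suff -> : (mmul Y0 u == M) = (u == mmul Z0 M) by [].
apply/eqP/eqP => [<-|->]; first by rewrite mmulA e2 mmul1l.
by rewrite mmulA e1 mmul1l.
Qed.

Lemma prod_bool (T : finType) (P : pred T) :
  \prod_(r : T) ((P r)%:R : algC) = [forall r, P r]%:R.
Proof.
case: (boolP [forall r, P r]) => [/forallP h|/forallPn[r hr]].
  by rewrite big1 // => r _; rewrite h.
by rewrite (bigD1 r) //= (negbTE hr) mul0r.
Qed.


Lemma Eqc_refl (C : seq {set I}) : set_composition C -> forall i, Eqc C i i.
Proof. by move=> hC i; rewrite (Eqc_bidx hC). Qed.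

Lemma sub_UR_UP (C : seq {set I}) : set_composition C -> forall i j, pUR C i j -> pUP C i j.
Proof.
move=> hC i j; rewrite /pUR /pUP; case/orP => [/eqP ->|/andP[-> ->]].
  by rewrite tau_refl Eqc_refl.
by rewrite orbT.
Qed.

Lemma sub_UL_UP (C : seq {set I}) i j : pUL C i j -> pUP C i j.
Proof. by rewrite /pUL /pUP => /andP[-> ->]. Qed.

Lemma sub_D_ULA i j : pD i j -> pUL A i j.
Proof.
rewrite /pD /pUL; case/orP => [/eqP ->|/and3P[-> _ ->]] //.
by rewrite tau_refl Eqc_refl.
Qed.

Lemma sub_D_URB i j : pD i j -> pUR B i j.
Proof. by rewrite /pD /pUR; case/orP => [->//|/and3P[-> -> _]]; rewrite orbT. Qed.

Lemma sub_URA_URB i j : pUR A i j -> pUR B i j.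
Proof.
rewrite /pUR (Asc_bidx hA) (Asc_bidx hB); case/orP => [->//|/andP[-> /ab_lt ->]].
by rewrite orbT.
Qed.

Lemma sub_ULB_ULA i j : pUL B i j -> pUL A i j.
Proof.
by rewrite /pUL (Eqc_bidx hA) (Eqc_bidx hB) => /andP[-> /eqP/ba_eq ->] /=.
Qed.

Lemma sub_UPB_UPA i j : pUP A i j -> pUP A i j.
Proof. by []. Qed.

Lemma UL_bdiag X : X \in UT F (pUL A) -> bdiag A X.
Proof.
case/UTP => _ sX i j e; rewrite sX ?mone_ij.
  by case: (eqVneq i j) e => [->|]; rewrite ?eqxx.
by rewrite /pUL (Eqc_bidx hA) (negbTE e) andbF.
Qed.

Definition bup (X : mat F I) := forall i j, (a j < a i)%N -> X (i, j) = 0.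

Lemma URB_bup X : X \in UT F (pUR B) -> bup X.
Proof.
case/UTP => _ sX i j h; rewrite sX ?mone_ij.
  by case: (eqVneq i j) h => [->|]; rewrite ?ltnn.
rewrite /pUR (Asc_bidx hB); apply/negP => /orP[/eqP e|/andP[_ /ba_le]].
  by rewrite e ltnn in h.
by rewrite leqNgt h.
Qed.

Lemma bup_bdpart X V : bup X -> bup V -> mmul X V = mone F I ->
  mmul (bdpart A X) (bdpart A V) = mone F I.
Proof.
move=> hX hV e; apply/ffunP => -[i j]; rewrite mmulE.
case: (eqVneq (a i) (a j)) => eij; last first.
  rewrite big1; first by rewrite mone_ij; case: (eqVneq i j) eij => [->|]; rewrite ?eqxx.
  move=> k _; rewrite !bdpartE; case: eqP => [eik|]; last by rewrite mul0r.
  by case: eqP => [ekj|]; [case/eqP: eij; rewrite eik ekj|rewrite mulr0].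
rewrite -e mmulE; apply: eq_bigr => k _; rewrite !bdpartE.
case: eqP => [eik|/eqP nik]; first by rewrite -eik eij eqxx.
rewrite mul0r; case: (ltngtP (a i) (a k)) nik => // h _.
  by rewrite (hV k j) ?mulr0 // -eij.
by rewrite hX ?mul0r.
Qed.

Lemma URB_inv w : w \in UT F (pUR B) -> minv w \in UT F (pUR B).
Proof.
move=> hw; have iw : invertible w by case/UTP: hw.
pose G := Group (@UTg_group F I (pUR B) (trans_pUR hB)).
pose g : GLt F I := exist _ w iw.
have gG : g \in G by rewrite /= UTgE.
by have := groupVr gG; rewrite /= UTgE.
Qed.

Lemma fact_URB w : w \in UT F (pUR B) ->
  exists x z, [/\ x \in UT F pD, z \in UT F (pUR A) & w = mmul x z].
Proof.
move=> hw; have hv := URB_inv hw.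
have iw : invertible w by case/UTP: hw.
have [e1 e2] := minvP iw.
have bw := URB_bup hw; have bv := URB_bup hv.
have f1 := bup_bdpart bw bv e1; have f2 := bup_bdpart bv bw e2.
exists (bdpart A w), (mmul (bdpart A (minv w)) w); split.
- apply/UTP; split; first by apply/existsP; exists (bdpart A (minv w)); rewrite f1 f2 eqxx.
  move=> i j pij; rewrite bdpartE; case: eqP => eij; last first.
    by rewrite mone_ij; case: (eqVneq i j) eij => [->|].
  case/UTP: hw => _ -> //; apply: contra pij; rewrite /pUR /pD (Eqc_bidx hA) eij eqxx andbT.
  by case/orP => [->|/andP[-> ->]]; rewrite ?orbT.
- apply/UTP; split.
    apply: (invertible_mul _ iw); apply/existsP; exists (bdpart A w); by rewrite f1 f2 eqxx.
  move=> i j pij; case: (eqVneq (a i) (a j)) => eij.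
    rewrite -f2 !mmulE; apply: eq_bigr => k _; rewrite !bdpartE.
    by case: eqP => [eik|]; [rewrite -eik eij eqxx|rewrite !mul0r].
  rewrite mone_ij; case: (eqVneq i j) eij => [->|nij eij]; first by rewrite eqxx.
  rewrite /= mmulE big1 // => k _; rewrite bdpartE.
  case: eqP => [eik|]; last by rewrite mul0r.
  have nkj : k != j by apply: contra eij => /eqP <-; rewrite eik.
  case/UTP: (hw) => _ sw; case: (boolP (pUR B k j)) => pkj; last first.
    by rewrite sw // mone_ij (negbTE nkj) mulr0.
  move: pkj; rewrite /pUR (negbTE nkj) (Asc_bidx hB) /= => /andP[tkj /ba_le lkj].
  have lij : (a i < a j)%N by rewrite ltn_neqAle eij eik.
  have ntij : ~~ tau i j by move: pij; rewrite /pUR (Asc_bidx hA) lij andbT negb_or => /andP[].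
  case/UTP: (hv) => _ sv; case: (eqVneq i k) => [eqik|nik].
    by rewrite eqik in ntij; rewrite tkj in ntij.
  rewrite sv ?mone_ij ?(negbTE nik) ?mul0r //.
  rewrite /pUR (negbTE nik) /=; apply/negP => /andP[tik _].
  by rewrite (tau_trans tik tkj) in ntij.
- by rewrite mmulA f1 mmul1l.
Qed.


Lemma DR_eq : (UTg F pD * UTg F (pUR A))%g = UTg F (pUR B).
Proof.
apply/setP => g; apply/mulsgP/idP => [[x z hx hz ->]|hg].
  rewrite UTgE valM; rewrite UTgE in hx; rewrite UTgE in hz.
  apply: (UT_mul (trans_pUR hB)); first exact: UT_sub sub_D_URB hx.
  exact: UT_sub sub_URA_URB hz.
rewrite UTgE in hg; have [x [z [hx hz e]]] := fact_URB hg.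
have ix : invertible x by case/UTP: hx.
have iz : invertible z by case/UTP: hz.
exists (exist _ x ix : GLt F I) (exist _ z iz : GLt F I); rewrite ?UTgE //.
by apply: val_inj; rewrite valM /= -e.
Qed.

Lemma Yr_UP Y r u : Y \in UT F (pUL B) -> u \in URr r ->
  mmul (blkmx A r Y) u \in UPr r.
Proof.
move=> hY hu; rewrite UPr_E; rewrite URr_E in hu.
have hYA : Y \in UT F (pUL A) := UT_sub sub_ULB_ULA hY.
have bY := UL_bdiag hYA.
have iY : invertible Y by case/UTP: hY.
apply: UT_mul.
- by move=> x k y; apply: (trans_pUP hB).
- apply/UTP; split; first exact: blk_invertible'.
  move=> x y hxy; rewrite blkmxE mone_sub; case/UTP: hY => _ -> //.
  by apply: contra hxy; apply: sub_UL_UP.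
- by apply: UT_sub hu => x y; apply: sub_UR_UP.
Qed.

Lemma main_eq (psi : mat F I -> algC) (Y : mat F I) : Y \in UL F tau B ->
  tensor_Resf tau A B (Resf tau A psi) Y = Resf tau B psi Y.
Proof.
move=> hY; have hY' : Y \in UT F (pUL B) := hY.
have iY : invertible Y by case/UTP: hY'.
have [eYZ eZY] := minvP iY.
have hYA : Y \in UT F (pUL A) := UT_sub sub_ULB_ULA hY'.
have bY : bdiag A Y := UL_bdiag hYA.
have bZ : bdiag A (minv Y) := bdiag_inv bY eYZ eZY.
have iZ := invertible_minv iY.
set Z := minv Y in eYZ eZY bZ iZ.
have S1 X : X \in UT F (pUL A) ->
  \prod_(r < n) Resf (@sub_rel I tau A r) (sub_comp B A r) (delta (blkmx A r X)) (blkmx A r Y)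
  = (#|UT F pD|%:R)^-1 * ((mmul Z X) \in UT F pD)%:R.
  move=> hX; have iX : invertible X by case/UTP: hX.
  have bX := UL_bdiag hX.
  rewrite (eq_bigr (fun r : 'I_n => (#|URr r|%:R)^-1 * ((blkmx A r (mmul Z X)) \in URr r)%:R)); last first.
    move=> r _; rewrite (@Resf_delta _ _ _ _ _ (blkmx A r Z)).
    - by rewrite blk_mul.
    - by move=> u hu; apply: Yr_UP.
    - by rewrite -blk_mul // eYZ blk_one.
    - by rewrite -blk_mul // eZY blk_one.
  rewrite big_split /= prodfV -natr_prod -card_D.
  rewrite (prod_bool (fun r : 'I_n => blkmx A r (mmul Z X) \in URr r)).
  rewrite -D_blocks //; [exact: bdiag_mul|exact: invertible_mul].
rewrite /tensor_Resf.
under eq_bigr => X hX do rewrite (S1 X hX).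
set c := (#|UT F pD|%:R)^-1.
pose g X := Resf tau A psi X.
have S2 : \sum_(X in UL F tau A) g X * (c * ((mmul Z X) \in UT F pD)%:R)
   = c * \sum_(x in UT F pD) g (mmul Y x).
  rewrite big_distrr /=.
  have -> : \sum_(x in UT F pD) c * g (mmul Y x) = \sum_(X in [set mmul Y x | x in UT F pD]) c * g X.
    rewrite big_imset //= => x1 x2 _ _ e.
    by rewrite -[x1]mmul1l -[x2]mmul1l -eZY -!mmulA e.
  rewrite (bigID (fun X => mmul Z X \in UT F pD)) /= [X in _ + X]big1 ?addr0; last first.
    by move=> X /andP[_]; rewrite /= => /negbTE ->; rewrite mulr0n !mulr0.
  apply: eq_big => [X|X /andP[_ ->]]; last by rewrite mulr1 mulrC.
  apply/andP/imsetP => [[hX hZX]|[x hx ->]].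
    by exists (mmul Z X) => //; rewrite mmulA eYZ mmul1l.
  split; last by rewrite mmulA eZY mmul1l.
  apply: (UT_mul (trans_pUL hA)) => //; exact: UT_sub sub_D_ULA hx.
rewrite S2.
have S3 x : x \in UT F pD ->
  g (mmul Y x) = (#|UT F (pUR A)|%:R)^-1 * \sum_(z in UT F (pUR A)) psi (mmul Y (mmul x z)).
  move=> hx; rewrite /g /Resf /Def; congr (_ * _); apply: eq_bigr => z hz.
  rewrite /Res mmulA ifT //; rewrite UP_E.
  apply: (UT_mul (trans_pUP hA)); last by apply: UT_sub hz; apply: sub_UR_UP.
  apply: (UT_mul (trans_pUP hA)); first by apply: UT_sub hYA; apply: sub_UL_UP.
  by apply: UT_sub hx => i j /sub_D_ULA; apply: sub_UL_UP.
under eq_bigr => x hx do rewrite (S3 x hx).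
rewrite -big_distrr /=.
pose h (w : GLt F I) := psi (mmul Y (val w)).
pose DG := Group (@UTg_group F I pD trans_pD).
pose RG := Group (@UTg_group F I (pUR A) (trans_pUR hA)).
have S4 : \sum_(x in UT F pD) \sum_(z in UT F (pUR A)) psi (mmul Y (mmul x z))
   = #|DG :&: RG|%:R * \sum_(w in UTg F (pUR B)) h w.
  rewrite sum_UTg; under eq_bigr => x _ do rewrite sum_UTg.
  by rewrite -DR_eq -(sum_mul_groups DG RG h).
rewrite S4.
have S5 : Resf tau B psi Y = (#|UTg F (pUR B)|%:R)^-1 * \sum_(w in UTg F (pUR B)) h w.
  rewrite /Resf /Def card_UTg; congr (_ * _); rewrite sum_UTg; apply: eq_bigr => w hw.
  rewrite /Res ifT // UP_E; apply: (UT_mul (trans_pUP hB)).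
    by apply: UT_sub hY'; apply: sub_UL_UP.
  by rewrite UTgE in hw; apply: UT_sub hw; apply: sub_UR_UP.
rewrite S5.
rewrite /c card_UTg.
have hc := mul_cardG DG RG; rewrite /= DR_eq !card_UTg in hc.
have h0 : (0 < #|DG :&: RG|)%N by apply: cardG_gt0.
have d0 : (0 < #|UT F pD|)%N by apply/card_gt0P; exists (mone F I); apply: UT1.
have r0 : (0 < #|UT F (pUR A)|)%N by apply/card_gt0P; exists (mone F I); apply: UT1.
move: hc h0 d0 r0.
set d := #|UT F pD|; set rr := #|UT F (pUR A)|; set u := #|UT F (pUR B)|.
set k := #|_ :&: _|; set S := \sum_(w in _) h w.
move=> hc h0 d0 r0.
have hcR : (d%:R * rr%:R = u%:R * k%:R :> algC) by rewrite -!natrM hc.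
have k0 : k%:R != 0 :> algC by rewrite pnatr_eq0 -lt0n.
have d0' : d%:R != 0 :> algC by rewrite pnatr_eq0 -lt0n.
have r0' : rr%:R != 0 :> algC by rewrite pnatr_eq0 -lt0n.
have u0' : u%:R != 0 :> algC.
  by apply/eqP => u00; move: hcR; rewrite u00 mul0r; apply/eqP; apply: mulf_neq0.
transitivity ((d%:R^-1 * rr%:R^-1 * k%:R) * S); first by rewrite !mulrA.
congr (_ * S).
have e : (d%:R * rr%:R)^-1 * k%:R = u%:R^-1 :> algC.
  by rewrite hcR invfM -mulrA mulVf // mulr1.
by rewrite invfM in e.
Qed.

End Main.

Theorem proposition4p8 (F : finFieldType) (I : finType) (tau : rel I)
  (A B : seq {set I}) :
  total_order tau -> set_composition A -> set_composition B -> refines B A ->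
  forall psi : mat F I -> algC, is_classfun (UT F tau) psi ->
  forall Y : mat F I, Y \in UL F tau B ->
    tensor_Resf tau A B (Resf tau A psi) Y = Resf tau B psi Y.
Proof.
move=> ht hA hB hR psi _ Y hY.
exact: (main_eq ht hA hB hR psi hY).
Qed.
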